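(* Let $C_1,C_2,\ell,r>0$ with $C_2\le C_1$, and let $T$ be a tree such that $\Delta(T)\le C_1$, all but $r$ vertices of $T$ have degree at most $C_2$, and $|V(T)|\ge \ell$. Then there exist disjoint vertex sets $A_1,\dots,A_s\subseteq V(T)$ such that: $V(T)=\bigcup_{i=1}^s A_i$; $T[A_i]$ is connected for each $1\le i\le s$; $\ell\le |A_i|\le C_1\ell$ for each $1\le i\le r$; and $\ell\le |A_i|\le C_2\ell$ for each $r<i\le s$.
   Context: $\Delta(T)$ denotes the maximum degree of $T$, and $T[A]$ denotes the subgraph of $T$ induced by $A$. *)

(* Defs.v *)
From mathcomp Require Import all_boot.
Set Implicit Arguments.
Unset Strict Implicit.
Unset Printing Implicit Defensive.

Definition simple_graph (T : finType) (e : rel T) : Prop :=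
  symmetric e /\ irreflexive e.

Definition deg (T : finType) (e : rel T) (x : T) : nat := #|[set y | e x y]|.

Definition connected_graph (T : finType) (e : rel T) : Prop :=
  forall x y : T, connect e x y.

Definition acyclic (T : finType) (e : rel T) : Prop :=
  forall p : seq T, uniq p -> 3 <= size p -> ~~ cycle e p.

Definition is_tree (T : finType) (e : rel T) : Prop :=
  simple_graph e /\ connected_graph e /\ acyclic e.

Definition induced (T : finType) (e : rel T) (A : {set T}) : rel T :=
  [rel u v | [&& e u v, u \in A & v \in A]].

Definition induced_connected (T : finType) (e : rel T) (A : {set T}) : Prop :=
  forall x y : T, x \in A -> y \in A -> connect (induced e A) x y.

(* Main.v *)
Require Import Defs.
From mathcomp Require Import all_boot.
From mathcomp Require Import zify.
Set Implicit Arguments.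
Unset Strict Implicit.
Unset Printing Implicit Defensive.

Lemma ph_exists (T : finType) (e : rel T) (rho : T) :
  (forall y, connect e rho y) ->
  exists (p : T -> T) (h : T -> nat),
    [/\ p rho = rho, forall y, y != rho -> e (p y) y
      & forall y, y != rho -> h (p y) < h y].
Proof.
move=> conn.
pose f := fun S : {set T} => S :|: [set z | [exists w in S, e w z]].
pose S n := iter n f [set rho].
have inS : forall q x n, x \in S n -> path e x q -> last x q \in S (n + size q).
  elim=> [|z q IH] x n xS /=; first by rewrite addn0.
  case/andP=> exz pq.
  rewrite -addSnnS; apply: IH => //.
  rewrite /S iterS -/(S n) /f in_setU; apply/orP; right.
  by rewrite inE; apply/existsP; exists x; rewrite xS.
have exS : forall y, exists n, y \in S n.
  move=> y; case/connectP: (conn y) => q pq ->.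
  exists (0 + size q); apply: inS => //; by rewrite /S /= set11.
pose h y := ex_minn (exS y).
have hS : forall y, y \in S (h y).
  by move=> y; rewrite /h; case: ex_minnP.
have hmin : forall y n, y \in S n -> h y <= n.
  by move=> y n yn; rewrite /h; case: ex_minnP => m _ ; apply.
pose p y := if [pick w | (w \in S (h y).-1) && e w y] is Some w then w else rho.
have key : forall y, y != rho -> exists w, (w \in S (h y).-1) && e w y.
  move=> y yr.
  have hy0 : 0 < h y.
    case H: (h y) => //; move: (hS y); rewrite H /S /= inE => /eqP yr'.
    by rewrite yr' eqxx in yr.
  have := hS y; rewrite -(prednK hy0) /S iterS -/(S _) /f in_setU.
  case/orP => [yk|].
    exfalso; have := hmin _ _ yk; lia.
  rewrite inE => /existsP [w /andP [wS ewy]]; exists w; by rewrite wS ewy.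
exists p, h; split.
- rewrite /p; case: pickP => // w /andP [wS ewy].
  have : h rho = 0 by apply/eqP; rewrite -leqn0; apply: (hmin rho 0); rewrite /S /= set11.
  move=> h0; move: wS; rewrite h0 /S /= inE => /eqP wr.
  by [].
- move=> y yr; rewrite /p; case: pickP => [w /andP [_ ->] //|H].
  by case: (key y yr) => w; rewrite H.
- move=> y yr; rewrite /p; case: pickP => [w /andP [wS _]|H].
    have := hmin _ _ wS; have: 0 < h y.
      case H: (h y) => //; move: (hS y); rewrite H /S /= inE => /eqP yr'.
      by rewrite yr' eqxx in yr.
    by case: (h y) => //= k _ hw; rewrite ltnS.
  by case: (key y yr) => w; rewrite H.
Qed.

Section Main.
Variables (T : finType) (e : rel T) (rho : T) (p : T -> T) (h : T -> nat).
Hypothesis esym : symmetric e.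
Hypothesis prho : p rho = rho.
Hypothesis pe : forall y, y != rho -> e y (p y).
Hypothesis ph : forall y, y != rho -> h (p y) < h y.

Definition pclosed (U : {set T}) := forall y, y \in U -> p y \in U.
Definition Dn (U : {set T}) x := [set y in U | fconnect p y x].
Definition Ch (U : {set T}) x := [set c in U | (p c == x) && (c != x)].

Lemma iter_rho n : iter n p rho = rho.
Proof. by elim: n => //= n ->. Qed.

Lemma reach_rho y : fconnect p y rho.
Proof.
suff : forall n y, h y < n -> exists k, iter k p y = rho.
  by case/(_ (h y).+1 y (ltnSn _)) => k <-; apply: fconnect_iter.
elim=> // n IH z hz.
case: (eqVneq z rho) => [->|zr]; first by exists 0.
have [k hk] : exists k, iter k p (p z) = rho.
  apply: IH; have := ph zr; lia.
by exists k.+1; rewrite iterSr.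
Qed.

Lemma iter_in U (cl : pclosed U) n y : y \in U -> iter n p y \in U.
Proof. by elim: n => //= n IH /IH; apply: cl. Qed.

Lemma fconP y x : reflect (exists n, iter n p y = x) (fconnect p y x).
Proof.
apply: (iffP idP) => [H|[n <-]]; last exact: fconnect_iter.
by exists (findex p y x); apply: iter_findex.
Qed.

Lemma Dn_sub U x : Dn U x \subset U.
Proof. by apply/subsetP => y; rewrite inE => /andP []. Qed.

Lemma Dn_path U x (cl : pclosed U) y : y \in Dn U x ->
  connect (induced e (Dn U x)) y x.
Proof.
rewrite inE => /andP [yU /fconP [n]].
elim: n y yU => [|n IH] y yU H; first by move: H => /= ->.
rewrite iterSr in H.
have pyD : p y \in Dn U x.
  by rewrite inE cl //=; apply/fconP; exists n.
apply: connect_trans (IH _ (cl _ yU) H).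
case: (eqVneq y rho) => [->|yr]; first by rewrite prho.
apply: connect1; rewrite /induced /= pe // pyD andbT inE yU /=.
by apply/fconP; exists n.+1; rewrite iterSr.
Qed.

Lemma Dn_conn U x (cl : pclosed U) : induced_connected e (Dn U x).
Proof.
move=> a b aD bD.
have isym : symmetric (induced e (Dn U x)).
  move=> u v; rewrite /induced /= esym.
  by case: (u \in _); case: (v \in _); rewrite ?andbT ?andbF.
apply: connect_trans (Dn_path cl aD) _.
by rewrite (sym_connect_sym isym); apply: Dn_path.
Qed.

Lemma Dn_rho U : Dn U rho = U.
Proof. by apply/setP => y; rewrite inE reach_rho andbT. Qed.

Lemma child_ex x : forall n y, iter n p y = x -> y != x ->
  exists j, p (iter j p y) = x /\ iter j p y != x.
Proof.
elim=> [|n IH] y H yx; first by move: H yx => /= ->; rewrite eqxx.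
rewrite iterSr in H.
case: (eqVneq (p y) x) => [pyx|pyx]; first by exists 0.
case: (IH _ H pyx) => j [H1 H2]; exists j.+1; by rewrite iterSr.
Qed.

Lemma Dn_split U x (cl : pclosed U) :
  Dn U x \subset x |: \bigcup_(c in Ch U x) Dn U c.
Proof.
apply/subsetP => y; rewrite inE => /andP [yU /fconP [n H]].
rewrite in_setU1; case: (eqVneq y x) => //= yx.
case: (child_ex H yx) => j [H1 H2].
apply/bigcupP; exists (iter j p y).
  by rewrite inE iter_in // H1 eqxx H2.
by rewrite inE yU; apply: fconnect_iter.
Qed.

Lemma card_bigcup_le (I : finType) (P : pred I) (F : I -> {set T}) :
  #|\bigcup_(i in P) F i| <= \sum_(i in P) #|F i|.
Proof.
apply: (big_ind2 (fun (A : {set T}) n => #|A| <= n)).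
- by rewrite cards0.
- move=> A m B n HA HB; apply: leq_trans (leq_card_setU A B) _; exact: leq_add.
- by [].
Qed.

Lemma Ch_card U x : #|Ch U x| <= deg e x /\ (x != rho -> #|Ch U x| < deg e x).
Proof.
have sub : Ch U x \subset [set y | e x y].
  apply/subsetP => c; rewrite !inE => /and3P [_ /eqP <- cx].
  by rewrite esym pe //; apply: contraNneq cx => ->; rewrite prho.
split; first exact: subset_leq_card.
move=> xr; rewrite /deg (cardsD1 (p x) [set y | e x y]) inE pe // add1n ltnS.
apply: subset_leq_card; apply/subsetP => c cC.
rewrite in_setD1 (subsetP sub _ cC) andbT.
apply/eqP => cpx; move: cC; rewrite inE cpx => /and3P [_ /eqP ppx _].
case: (eqVneq (p x) rho) => [pr|pr].
  by move: ppx; rewrite pr prho => /eqP; rewrite eq_sym (negbTE xr).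
have := ph pr; have := ph xr; rewrite ppx; lia.
Qed.

End Main.

Lemma ar1 d C l : d <= C -> 0 < C -> 0 < l -> 1 + d*(l-1) <= C*l.
Proof. move=> dC C0 l0; nia. Qed.

Section Main2.
Variables (T : finType) (e : rel T) (rho : T) (p : T -> T) (h : T -> nat).
Hypothesis esym : symmetric e.
Hypothesis prho : p rho = rho.
Hypothesis pe : forall y, y != rho -> e y (p y).
Hypothesis ph : forall y, y != rho -> h (p y) < h y.
Variables (l C1 C2 : nat).
Hypotheses (l0 : 0 < l) (C10 : 0 < C1) (C20 : 0 < C2) (C21 : C2 <= C1)
  (degb : forall x, deg e x <= C1).

Definition high (U : {set T}) := [set y in U | C2 < deg e y].

Definition good (U : {set T}) (L : seq {set T}) :=
  [/\ uniq L, {in L &, forall X Y : {set T}, X != Y -> [disjoint X & Y]},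
      \bigcup_(X <- L) X = U,
      {in L, forall X : {set T}, induced_connected e X /\ l <= #|X| <= C1 * l}
    & count (fun X : {set T} => C2 * l < #|X|) L <= #|high U|].

Lemma ar2 d : C2 * l < 1 + d * (l - 1) -> C2 < d.
Proof. move=> H; rewrite ltnNge; apply/negP => dC; have := ar1 dC C20 l0; lia. Qed.

Lemma single U y : pclosed p U -> y \in U -> l <= #|U| ->
  #|U| <= 1 + deg e y * (l-1) -> good U [:: U].
Proof.
move=> cl yU lU Ub; split => //.
- by move=> X Y; rewrite !inE => /eqP -> /eqP ->; rewrite eqxx.
- by rewrite big_seq1.
- move=> X; rewrite inE => /eqP ->; split.
    by rewrite -(Dn_rho ph U); apply: (Dn_conn esym prho pe cl).
  by rewrite lU /=; apply: leq_trans Ub _; apply: ar1.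
- rewrite /= addn0; case: (boolP (C2 * l < #|U|)) => big //.
  have hy : y \in high U by rewrite inE yU; apply: ar2; apply: leq_trans Ub.
  by rewrite card_gt0; apply/set0Pn; exists y.
Qed.


Lemma sub_bigcup_seq (L : seq {set T}) X : X \in L -> X \subset \bigcup_(Y <- L) Y.
Proof.
elim: L => // Y L IH; rewrite inE big_cons => /orP [/eqP ->|/IH H].
  exact: subsetUl.
exact: subset_trans H (subsetUr _ _).
Qed.

Lemma main n : forall U : {set T}, #|U| <= n -> rho \in U -> pclosed p U -> l <= #|U| ->
  exists L, good U L.
Proof.
elim: n => [|n IH] U cU rU cl lU.
  by have := leq_trans lU cU; lia.
pose X := [set x in U | l <= #|Dn p U x|].
have rX : rho \in X by rewrite inE rU (Dn_rho ph).
case: (@arg_maxnP _ rho (fun z => z \in X) h rX) => x xX xmax.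
move: xX; rewrite inE => /andP [xU lD].
have Dc : forall c, c \in Ch p U x -> #|Dn p U c| < l.
  move=> c; rewrite inE => /and3P [cU0 /eqP pc cx]; rewrite ltnNge; apply/negP => lc.
  have hc := xmax c (_ : c \in X).
  have cr : c != rho.
    by apply: contraNneq cx => cr; rewrite -pc cr prho.
  have := ph cr; rewrite pc; have := hc; rewrite inE cU0 lc => H; have := H isT; lia.
have sizeD : #|Dn p U x| <= 1 + #|Ch p U x| * (l-1).
  apply: leq_trans (subset_leq_card (Dn_split x cl)) _.
  rewrite cardsU1; apply: leq_add; first by case: (_ \notin _).
  apply: leq_trans (card_bigcup_le _ _) _.
  rewrite -sum_nat_const; apply: leq_sum => c cC; have := Dc c cC; lia.
case: (Ch_card esym prho pe ph U x) => ChD ChDr.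
case: (eqVneq x rho) => [xr|xr].
  exists [:: U]; apply: (single (y:=x)) => //.
  rewrite -{1}(Dn_rho ph U) -xr; apply: leq_trans sizeD _.
  by rewrite leq_add2l leq_mul2r ChD orbT.
pose U' := U :\: Dn p U x.
have xD : x \in Dn p U x by rewrite inE xU; apply: connect0.
have cardU : #|U| = #|Dn p U x| + #|U'|.
  by rewrite -(cardsID (Dn p U x) U) (setIidPr (Dn_sub p U x)).
have cU' : #|U'| <= n.
  have : 0 < #|Dn p U x| by rewrite card_gt0; apply/set0Pn; exists x.
  lia.
have rU' : rho \in U'.
  rewrite in_setD rU andbT inE rU /=; apply/negP => /fconP [k].
  by rewrite iter_rho // => xr'; rewrite xr' eqxx in xr.
have cl' : pclosed p U'.
  move=> y; rewrite !in_setD => /andP [yD yU]; rewrite cl // andbT.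
  apply: contra yD; rewrite !inE => /andP [_ /fconP [k Hk]]; rewrite yU /=.
  by apply/fconP; exists k.+1; rewrite iterSr.
case: (leqP l #|U'|) => lU'.
  case: (IH U' cU' rU' cl' lU') => L' [u' dj' cov' pc' cnt'].
  have sub' : forall Y, Y \in L' -> Y \subset U'.
    by move=> Y YL; rewrite -cov'; apply: sub_bigcup_seq.
  have disj : forall Y, Y \in L' -> [disjoint Dn p U x & Y].
    move=> Y /sub' YU; rewrite disjoint_subset; apply/subsetP => z zD.
    by rewrite inE; apply/negP => /(subsetP YU); rewrite in_setD zD.
  have DnL : Dn p U x \notin L'.
    by apply/negP => /sub' /subsetP /(_ x xD); rewrite in_setD xD.
  exists (Dn p U x :: L'); split.
  - by rewrite /= DnL u'.
  - move=> Y Z; rewrite !inE => /orP [/eqP ->|YL] /orP [/eqP ->|ZL].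
    + by rewrite eqxx.
    + by move=> _; apply: disj.
    + by move=> _; rewrite disjoint_sym; apply: disj.
    + exact: dj'.
  - rewrite big_cons cov'; apply/setP => z; rewrite in_setU in_setD.
    case: (boolP (z \in Dn p U x)) => zD //=.
    by rewrite (subsetP (Dn_sub p U x) z zD).
  - move=> Y; rewrite inE => /orP [/eqP ->|/pc' //]; split.
      exact: (Dn_conn esym prho pe cl).
    rewrite lD /=; apply: leq_trans sizeD _; apply: ar1 => //.
    exact: leq_trans ChD (degb x).
  - have hsub : high U' \subset high U :\ x.
      apply/subsetP => z; rewrite !inE => /andP [/andP [zD zU] hz].
      rewrite zU hz andbT.
      rewrite andbT; apply/eqP => zx; move: zD; rewrite zx.
      by rewrite xU connect0.
    have := subset_leq_card hsub.
    rewrite (cardsD1 x (high U)) /=.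
    case: (boolP (C2 * l < #|Dn p U x|)) => big.
      have xh : x \in high U.
        rewrite inE xU /=; have := ar2 (leq_trans big sizeD); lia.
      rewrite xh; lia.
    case: (x \in high U); lia.
exists [:: U]; apply: (single (y:=x)) => //.
rewrite cardU; have := ChDr xr; nia.
Qed.

End Main2.

Theorem lemma2p1 (C1 C2 l r : nat) (T : finType) (e : rel T) :
  0 < C1 -> 0 < C2 -> 0 < l -> 0 < r -> C2 <= C1 ->
  is_tree e ->
  (forall x : T, deg e x <= C1) ->
  #|[set x : T | C2 < deg e x]| <= r ->
  l <= #|T| ->
  exists (s : nat) (A : nat -> {set T}),
    [/\ (forall i j, i < s -> j < s -> i != j -> [disjoint A i & A j]),
        \bigcup_(i < s) A i = [set: T],
        (forall i, i < s -> induced_connected e (A i)),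
        (forall i, i < s -> i < r -> l <= #|A i| <= C1 * l)
      & (forall i, i < s -> r <= i -> l <= #|A i| <= C2 * l)].
Proof.
move=> C10 C20 l0 r0 C21 [[esym irr] [conn _]] degb hr lT.
have /card_gt0P [rho _] := leq_trans l0 lT.
case: (ph_exists (conn rho)) => p [h [prho pe' ph]].
have pe : forall y, y != rho -> e y (p y) by move=> y yr; rewrite esym; apply: pe'.
have cl : pclosed p [set: T] by move=> y; rewrite inE.
have lT' : l <= #|[set: T]| by rewrite cardsT.
have [L [uL dj cov pc cnt]] :=
  main esym prho pe ph l0 C10 C20 C21 degb (leqnn #|[set: T]|) (in_setT rho) cl lT'.
pose big := fun X : {set T} => C2 * l < #|X|.
pose L' := filter big L ++ filter (predC big) L.
have pL : perm_eq L' L by apply/permPl; exact: perm_filterC.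
have memL : forall X, (X \in L') = (X \in L) by move=> X; apply: perm_mem.
have uL' : uniq L' by rewrite (perm_uniq pL).
have hb : count big L <= r.
  apply: leq_trans cnt _; apply: leq_trans hr; apply: subset_leq_card.
  by apply/subsetP => y; rewrite !inE.
have inL : forall i, i < size L' -> nth set0 L' i \in L.
  by move=> i iL; rewrite -memL mem_nth.
exists (size L'), (fun i => nth set0 L' i); split.
- move=> i j iS jS ij; apply: dj; rewrite ?inL //.
  by rewrite nth_uniq.
- rewrite -(big_mkord xpredT (fun i => nth set0 L' i)).
  rewrite -(big_nth set0 (r:=L') xpredT (fun X => X)) (perm_big _ pL) cov //.
- by move=> i iS; case: (pc _ (inL i iS)).
- by move=> i iS _; case: (pc _ (inL i iS)).
- move=> i iS ri; case: (pc _ (inL i iS)) => _ /andP [-> _] /=.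
  have iS' := iS; rewrite size_cat in iS'.
  rewrite nth_cat.
  have : size [seq x <- L | big x] <= i by rewrite size_filter; apply: leq_trans hb ri.
  move=> hi; have -> : (i < size [seq x <- L | big x]) = false by rewrite ltnNge hi.
  have : nth set0 [seq x <- L | predC big x] (i - size [seq x <- L | big x])
           \in [seq x <- L | predC big x].
    apply: mem_nth; rewrite -(ltn_add2l (size [seq x <- L | big x])) subnKC //.
  by rewrite mem_filter /= /big -leqNgt => /andP [].
Qed.
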